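(* Let $\mathfrak{C}$ be a verification condition provider. (1) Assume that $\mathrm{trans}^{\preceq}_{\mathrm{dwp}}$ preserves $\mathfrak{C}$ and that $\mathfrak{C}$ yields upper bounds for $\mathrm{dwp}$. Then for all $C,C'\in\mathsf{pGCL}$ and all $f\in\mathbb{E}$: if $\mathrm{vc}^{\mathfrak{C},\mathrm{dwp}}[\![C]\!](f)$ holds and $C'\multimap\mathrm{trans}^{\preceq}_{\mathrm{dwp}}[\![C]\!](f)$, then $$\mathrm{dwp}[\![C]\!](f)\le\mathrm{dwp}[\![C']\!](f)\le\mathrm{dwp}^*[\![C]\!](f).$$ (2) Dually, assume that $\mathrm{trans}^{\succeq}_{\mathrm{awp}}$ preserves $\mathfrak{C}$ and that $\mathfrak{C}$ yields lower bounds for $\mathrm{awp}$. Then for all $C,C'\in\mathsf{pGCL}$ and all $f\in\mathbb{E}$: if $\mathrm{vc}^{\mathfrak{C},\mathrm{awp}}[\![C]\!](f)$ holds and $C'\multimap\mathrm{trans}^{\succeq}_{\mathrm{awp}}[\![C]\!](f)$, then $$\mathrm{awp}[\![C]\!](f)\ge\mathrm{awp}[\![C']\!](f)\ge\mathrm{awp}^*[\![C]\!](f).$$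
   Context: States: fix a countably infinite set of program variables with values in $\mathbb{Q}_{\ge 0}$; a state is a map $\sigma$ from variables to $\mathbb{Q}_{\ge0}$ which is $0$ for all but finitely many variables; $\mathsf{States}$ is the set of states. A predicate is a map $\varphi:\mathsf{States}\to\{\mathsf{true},\mathsf{false}\}$; $\varphi\models\psi$ means every state satisfying $\varphi$ satisfies $\psi$; $\models\varphi$ means $\varphi$ holds in every state; $\varphi\Rightarrow\psi$ is the usual implication. Expectations: $\mathbb{E}$ is the set of maps $\mathsf{States}\to[0,\infty]$, ordered pointwise ($\le$, $\ge$); $+,\cdot$ pointwise with $0\cdot\infty=0$; $\sqcap,\sqcup$ pointwise min/max; $[\varphi]$ Iverson bracket; $(\varphi\to g)(\sigma)=g(\sigma)$ if $\sigma\models\varphi$, else $\infty$; $f[x/E](\sigma)=f(\sigma[x\mapsto E(\sigma)])$. Programs of $\mathsf{pGCL}$: $C ::= \mathtt{skip} \mid x:=E \mid C;C \mid \mathtt{if}\ \varphi_1\to C\ \square\ \varphi_2\to C \mid \{C\}[p]\{C\} \mid \mathtt{while}(\varphi)\{C\}[I]$, where $E:\mathsf{States}\to\mathbb{Q}_{\ge0}$, $p:\mathsf{States}\to[0,1]$, in every guarded choice $\varphi_1\vee\varphi_2$ is valid, and every loop carries an invariant annotation $I\in\mathbb{E}$. Weakest preexpectations for $\mathcal{T}\in\{\mathrm{dwp},\mathrm{awp}\}$: $\mathcal{T}[\![\mathtt{skip}]\!](f)=f$; $\mathcal{T}[\![x:=E]\!](f)=f[x/E]$; $\mathcal{T}[\![C_1;C_2]\!](f)=\mathcal{T}[\![C_1]\!](\mathcal{T}[\![C_2]\!](f))$;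 $\mathrm{dwp}$ of a guarded choice: $(\varphi_1\to\mathrm{dwp}[\![C_1]\!](f))\sqcap(\varphi_2\to\mathrm{dwp}[\![C_2]\!](f))$; $\mathrm{awp}$ of a guarded choice: $[\varphi_1]\cdot\mathrm{awp}[\![C_1]\!](f)\sqcup[\varphi_2]\cdot\mathrm{awp}[\![C_2]\!](f)$; $\mathcal{T}[\![\{C_1\}[p]\{C_2\}]\!](f)=p\cdot\mathcal{T}[\![C_1]\!](f)+(1-p)\cdot\mathcal{T}[\![C_2]\!](f)$; loops: least fixpoint of $g\mapsto[\neg\varphi]\cdot f+[\varphi]\cdot\mathcal{T}[\![C']\!](g)$. The auxiliary transformer $\mathcal{T}^*$ follows the same rules except $\mathcal{T}^*[\![\mathtt{while}(\varphi)\{C'\}[I]]\!](f)=I$. Implementation relation $\multimap$: the smallest partial order on $\mathsf{pGCL}$ closed under: if $C_1'\multimap C_1$, $C_2'\multimap C_2$ then $C_1';C_2'\multimap C_1;C_2$ and $\{C_1'\}[p]\{C_2'\}\multimap\{C_1\}[p]\{C_2\}$; if moreover $\varphi_1'\models\varphi_1$, $\varphi_2'\models\varphi_2$, $\models\varphi_1'\vee\varphi_2'$ then $\mathtt{if}\ \varphi_1'\to C_1'\ \square\ \varphi_2'\to C_2'\multimap\mathtt{if}\ \varphi_1\to C_1\ \square\ \varphi_2\to C_2$; if $C'\multimap C$ then $\mathtt{while}(\varphi)\{C'\}\multimap\mathtt{while}(\varphi)\{C\}$. Verification conditions: a verification condition provider is a map $\mathfrak{C}$ assigning to each annotated loop $\mathtt{while}(\varphi)\{C'\}[I]$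 and each $f\in\mathbb{E}$ a truth value. For $\mathcal{T}\in\{\mathrm{dwp},\mathrm{awp}\}$, $\mathrm{vc}^{\mathfrak{C},\mathcal{T}}[\![C]\!](f)\in\{\mathsf{true},\mathsf{false}\}$ is defined inductively: $\mathsf{true}$ for $\mathtt{skip}$ and assignments; $\mathrm{vc}[\![C_1]\!](\mathcal{T}^*[\![C_2]\!](f))\wedge\mathrm{vc}[\![C_2]\!](f)$ for $C_1;C_2$; $\mathrm{vc}[\![C_1]\!](f)\wedge\mathrm{vc}[\![C_2]\!](f)$ for guarded and probabilistic choices; $\mathfrak{C}(\mathtt{while}(\varphi)\{C'\}[I],f)\wedge\mathrm{vc}[\![C']\!](I)$ for loops. $\mathfrak{C}$ yields upper (resp. lower) bounds for $\mathcal{T}$ if for all $C\in\mathsf{pGCL}$ and $f\in\mathbb{E}$, $\mathrm{vc}^{\mathfrak{C},\mathcal{T}}[\![C]\!](f)$ implies $\mathcal{T}[\![C]\!](f)\le\mathcal{T}^*[\![C]\!](f)$ (resp. $\ge$). Comparison predicates: $f\preceq g$ true at $\sigma$ iff $f(\sigma)\le g(\sigma)$; $f\succeq g$ true at $\sigma$ iff $f(\sigma)\ge g(\sigma)$. Transformer $\mathrm{trans}^{\bowtie}_{\mathcal{T}}$ ($\bowtie\in\{\preceq,\succeq\}$), by induction: $\mathtt{skip}$ and assignments unchanged; $C_1;C_2\mapsto \mathrm{trans}^{\bowtie}_{\mathcal{T}}[\![C_1]\!](\mathcal{T}^*[\![C_2]\!](f));\mathrm{trans}^{\bowtie}_{\mathcal{T}}[\![C_2]\!](f)$;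 $\mathtt{if}\ \varphi_1\to C_1\ \square\ \varphi_2\to C_2\mapsto \mathtt{if}\ \psi_1\to\mathrm{trans}^{\bowtie}_{\mathcal{T}}[\![C_1]\!](f)\ \square\ \psi_2\to\mathrm{trans}^{\bowtie}_{\mathcal{T}}[\![C_2]\!](f)$ with $\psi_1=\varphi_1\wedge(\varphi_2\Rightarrow \mathcal{T}^*[\![C_1]\!](f)\bowtie\mathcal{T}^*[\![C_2]\!](f))$, $\psi_2=\varphi_2\wedge(\varphi_1\Rightarrow \mathcal{T}^*[\![C_2]\!](f)\bowtie\mathcal{T}^*[\![C_1]\!](f))$; $\{C_1\}[p]\{C_2\}\mapsto\{\mathrm{trans}^{\bowtie}_{\mathcal{T}}[\![C_1]\!](f)\}[p]\{\mathrm{trans}^{\bowtie}_{\mathcal{T}}[\![C_2]\!](f)\}$; $\mathtt{while}(\varphi)\{C'\}[I]\mapsto\mathtt{while}(\varphi)\{\mathrm{trans}^{\bowtie}_{\mathcal{T}}[\![C']\!](I)\}[I]$. Preservation: $\mathrm{trans}^{\preceq}_{\mathrm{dwp}}$ preserves $\mathfrak{C}$ if for all $C,C'\in\mathsf{pGCL}$, $f\in\mathbb{E}$: $\mathrm{vc}^{\mathfrak{C},\mathrm{dwp}}[\![C]\!](f)$ and $C'\multimap\mathrm{trans}^{\preceq}_{\mathrm{dwp}}[\![C]\!](f)$ imply $\mathrm{vc}^{\mathfrak{C},\mathrm{dwp}}[\![C']\!](f)$; analogously $\mathrm{trans}^{\succeq}_{\mathrm{awp}}$ preserves $\mathfrak{C}$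 with $\mathrm{awp}$ in place of $\mathrm{dwp}$. *)

(* Defs.v *)
From HB Require Import structures.
From mathcomp Require Import all_boot all_order all_algebra.
From mathcomp Require Import all_classical all_reals ereal.
Set Implicit Arguments. Unset Strict Implicit. Unset Printing Implicit Defensive.
Import Order.TTheory GRing.Theory Num.Theory.
Local Open Scope classical_set_scope.
Local Open Scope ring_scope.

Record state := State {
  sval :> nat -> rat ;
  sval_ge0 : forall x, 0 <= sval x ;
  sval_fin : exists n, forall x, (n <= x)%N -> sval x = 0 }.

Record aexp := AExp { aeval :> state -> rat ; aeval_ge0 : forall s, 0 <= aeval s }.

Definition pred_st := state -> bool.

Definition upd_fun (s : state) (x : nat) (v : rat) : nat -> rat :=
  fun y => if y == x then v else s y.

Lemma upd_ge0 (s : state) x v : 0 <= v -> forall y, 0 <= upd_fun s x v y.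
Proof. by move=> v0 y; rewrite /upd_fun; case: ifP => // _; exact: sval_ge0. Qed.

Lemma upd_fin (s : state) x v : exists n, forall y, (n <= y)%N -> upd_fun s x v y = 0.
Proof.
case: (sval_fin s) => n Hn; exists (maxn n x.+1) => y; rewrite geq_max => /andP[ny xy].
rewrite /upd_fun; case: eqP => [eyx|_]; last exact: Hn.
by move: xy; rewrite eyx ltnn.
Qed.

Definition upd (s : state) (x : nat) (E : aexp) : state :=
  @State (upd_fun s x (E s)) (upd_ge0 s x (aeval_ge0 E s)) (upd_fin s x (E s)).

Section pGCL.
Variable R : realType.
Local Open Scope ereal_scope.

Record prob := Prob { peval :> state -> R ;
  peval_ge0 : forall s, (0 <= peval s)%R ; peval_le1 : forall s, (peval s <= 1)%R }.

Record expect := Expect { ev :> state -> \bar R ; ev_ge0 : forall s, 0 <= ev s }.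

Definition exp_le (f g : expect) : Prop := forall s, f s <= g s.

Definition iv (b : bool) : \bar R := if b then 1 else 0.

Lemma iv_ge0 b : 0 <= iv b. Proof. by case: b. Qed.

Definition e_subst (f : expect) (x : nat) (E : aexp) : expect :=
  @Expect (fun s => f (upd s x E)) (fun s => ev_ge0 f _).

Lemma e_dmin_ge0 (p1 p2 : pred_st) (g1 g2 : expect) s :
  0 <= Order.min (if p1 s then g1 s else +oo) (if p2 s then g2 s else +oo).
Proof.
by rewrite le_min; apply/andP; split; [case: (p1 s)|case: (p2 s)]; rewrite ?leey ?ev_ge0.
Qed.
Definition e_dmin (p1 p2 : pred_st) (g1 g2 : expect) : expect :=
  @Expect (fun s => Order.min (if p1 s then g1 s else +oo) (if p2 s then g2 s else +oo))
          (e_dmin_ge0 p1 p2 g1 g2).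

Lemma e_amax_ge0 (p1 p2 : pred_st) (g1 g2 : expect) s :
  0 <= Order.max (iv (p1 s) * g1 s) (iv (p2 s) * g2 s).
Proof. by rewrite le_max mule_ge0 ?iv_ge0 ?ev_ge0. Qed.
Definition e_amax (p1 p2 : pred_st) (g1 g2 : expect) : expect :=
  @Expect (fun s => Order.max (iv (p1 s) * g1 s) (iv (p2 s) * g2 s))
          (e_amax_ge0 p1 p2 g1 g2).

Lemma e_pchoice_ge0 (p : prob) (g1 g2 : expect) s :
  0 <= (p s)%:E * g1 s + (1 - p s)%R%:E * g2 s.
Proof.
apply: adde_ge0; apply: mule_ge0; rewrite ?ev_ge0 ?lee_fin ?peval_ge0 //.
by rewrite subr_ge0 peval_le1.
Qed.
Definition e_pchoice (p : prob) (g1 g2 : expect) : expect :=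
  @Expect (fun s => (p s)%:E * g1 s + (1 - p s)%R%:E * g2 s) (e_pchoice_ge0 p g1 g2).

Lemma e_loopstep_ge0 (phi : pred_st) (f g : expect) s :
  0 <= iv (~~ phi s) * f s + iv (phi s) * g s.
Proof. by rewrite adde_ge0 // mule_ge0 ?iv_ge0 ?ev_ge0. Qed.
Definition e_loopstep (phi : pred_st) (f g : expect) : expect :=
  @Expect (fun s => iv (~~ phi s) * f s + iv (phi s) * g s) (e_loopstep_ge0 phi f g).

Lemma lfp_ge0 (Phi : expect -> expect) s :
  0 <= ereal_inf [set (g : expect) s | g in [set g | exp_le (Phi g) g]].
Proof. by apply: le_ereal_inf_tmp => _ [g _ <-]; exact: ev_ge0. Qed.
Definition lfp (Phi : expect -> expect) : expect :=
  @Expect (fun s => ereal_inf [set (g : expect) s | g in [set g | exp_le (Phi g) g]])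
          (lfp_ge0 Phi).

Inductive prog :=
| Skip
| Assign of nat & aexp
| Seq of prog & prog
| If (phi1 phi2 : pred_st) of (forall s, phi1 s || phi2 s) & prog & prog
| PChoice of prog & prob & prog
| While of pred_st & prog & expect.              (* while(phi){C'}[I] *)

Inductive mode := Dwp | Awp.

Fixpoint wp (m : mode) (C : prog) (f : expect) : expect :=
  match C with
  | Skip => f
  | Assign x E => e_subst f x E
  | Seq C1 C2 => wp m C1 (wp m C2 f)
  | If p1 p2 _ C1 C2 =>
      match m with
      | Dwp => e_dmin p1 p2 (wp m C1 f) (wp m C2 f)
      | Awp => e_amax p1 p2 (wp m C1 f) (wp m C2 f)
      end
  | PChoice C1 p C2 => e_pchoice p (wp m C1 f) (wp m C2 f)
  | While phi C' Inv => lfp (fun g => e_loopstep phi f (wp m C' g))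
  end.

Fixpoint wpstar (m : mode) (C : prog) (f : expect) : expect :=
  match C with
  | Skip => f
  | Assign x E => e_subst f x E
  | Seq C1 C2 => wpstar m C1 (wpstar m C2 f)
  | If p1 p2 _ C1 C2 =>
      match m with
      | Dwp => e_dmin p1 p2 (wpstar m C1 f) (wpstar m C2 f)
      | Awp => e_amax p1 p2 (wpstar m C1 f) (wpstar m C2 f)
      end
  | PChoice C1 p C2 => e_pchoice p (wpstar m C1 f) (wpstar m C2 f)
  | While phi C' Inv => Inv
  end.

Definition dwp := wp Dwp.
Definition awp := wp Awp.
Definition dwpstar := wpstar Dwp.
Definition awpstar := wpstar Awp.

Inductive impl : prog -> prog -> Prop :=
| impl_refl C : impl C C
| impl_trans C1 C2 C3 : impl C1 C2 -> impl C2 C3 -> impl C1 C3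
| impl_seq C1' C2' C1 C2 : impl C1' C1 -> impl C2' C2 -> impl (Seq C1' C2') (Seq C1 C2)
| impl_pchoice C1' C2' C1 C2 p :
    impl C1' C1 -> impl C2' C2 -> impl (PChoice C1' p C2') (PChoice C1 p C2)
| impl_if C1' C2' C1 C2 (p1' p2' p1 p2 : pred_st) H' H :
    impl C1' C1 -> impl C2' C2 ->
    (forall s, p1' s -> p1 s) -> (forall s, p2' s -> p2 s) ->
    (forall s, p1' s || p2' s) ->
    impl (@If p1' p2' H' C1' C2') (@If p1 p2 H C1 C2)
| impl_while (phi : pred_st) C' C (Inv : expect) :
    impl C' C -> impl (While phi C' Inv) (While phi C Inv).

Definition vcprov := pred_st -> prog -> expect -> expect -> Prop.
(* vcp phi C' I f  =  C(while(phi){C'}[I], f) *)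

Fixpoint vc (vcp : vcprov) (m : mode) (C : prog) (f : expect) : Prop :=
  match C with
  | Skip => True
  | Assign _ _ => True
  | Seq C1 C2 => vc vcp m C1 (wpstar m C2 f) /\ vc vcp m C2 f
  | If _ _ _ C1 C2 => vc vcp m C1 f /\ vc vcp m C2 f
  | PChoice C1 _ C2 => vc vcp m C1 f /\ vc vcp m C2 f
  | While phi C' Inv => vcp phi C' Inv f /\ vc vcp m C' Inv
  end.

Definition yields_upper (vcp : vcprov) (m : mode) : Prop :=
  forall C f, vc vcp m C f -> exp_le (wp m C f) (wpstar m C f).

Definition yields_lower (vcp : vcprov) (m : mode) : Prop :=
  forall C f, vc vcp m C f -> exp_le (wpstar m C f) (wp m C f).

Definition cmp (dir : bool) (a b : \bar R) : bool := if dir then a <= b else b <= a.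

Definition psi1 (dir : bool) (p1 p2 : pred_st) (a b : expect) : pred_st :=
  fun s => p1 s && (p2 s ==> cmp dir (a s) (b s)).
Definition psi2 (dir : bool) (p1 p2 : pred_st) (a b : expect) : pred_st :=
  fun s => p2 s && (p1 s ==> cmp dir (b s) (a s)).

Lemma psi_cover dir (p1 p2 : pred_st) (H : forall s, p1 s || p2 s) (a b : expect) s :
  psi1 dir p1 p2 a b s || psi2 dir p1 p2 a b s.
Proof.
rewrite /psi1 /psi2 /cmp; move: (H s).
case: (p1 s); case: (p2 s) => //= _; case: dir => //=.
- by case: (leP (a s) (b s)) => // /ltW ->; rewrite orbT.
- by case: (leP (b s) (a s)) => // /ltW ->; rewrite orbT.
Qed.

Fixpoint trans (m : mode) (dir : bool) (C : prog) (f : expect) : prog :=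
  match C with
  | Skip => Skip
  | Assign x E => Assign x E
  | Seq C1 C2 => Seq (trans m dir C1 (wpstar m C2 f)) (trans m dir C2 f)
  | If p1 p2 H C1 C2 =>
      @If (psi1 dir p1 p2 (wpstar m C1 f) (wpstar m C2 f))
          (psi2 dir p1 p2 (wpstar m C1 f) (wpstar m C2 f))
          (psi_cover dir H (wpstar m C1 f) (wpstar m C2 f))
          (trans m dir C1 f) (trans m dir C2 f)
  | PChoice C1 p C2 => PChoice (trans m dir C1 f) p (trans m dir C2 f)
  | While phi C' Inv => While phi (trans m dir C' Inv) Inv
  end.

Definition trans_dwp := trans Dwp true.
Definition trans_awp := trans Awp false.

Definition preserves (vcp : vcprov) (m : mode) (tr : prog -> expect -> prog) : Prop :=
  forall C C' f, vc vcp m C f -> impl C' (tr C f) -> vc vcp m C' f.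

End pGCL.

(* Main.v *)
Require Import Defs.
From mathcomp Require Import all_boot all_order all_algebra.
From mathcomp Require Import all_classical all_reals ereal.
Import Order.TTheory GRing.Theory Num.Theory.
Local Open Scope ereal_scope.

Section Proofs.
Variable R : realType.
Local Set Implicit Arguments.

Definition mle (m : mode) (a b : \bar R) : bool :=
  match m with Dwp => a <= b | Awp => b <= a end.

Lemma ivM (b : bool) (x : \bar R) : iv R b * x = if b then x else 0.
Proof. by case: b; rewrite /iv ?mul1e ?mul0e. Qed.

Lemma wpstar_mono m (C : prog R) : forall (f g : expect R),
  (forall s, f s <= g s) -> forall s, wpstar m C f s <= wpstar m C g s.
Proof.
elim: C => [|x E|C1 IH1 C2 IH2|p1 p2 H C1 IH1 C2 IH2|C1 IH1 p C2 IH2|phi C IH I]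
  f g fg s /=.
- exact: fg.
- exact: fg.
- by apply: IH1 => s'; apply: IH2.
- destruct m => /=.
  + by apply: le_min2; case: (p1 s); case: (p2 s) => //; apply: IH1 || apply: IH2.
  + by apply: le_max2; apply: lee_wpmul2l; rewrite ?iv_ge0 //; [apply: IH1|apply: IH2].
- apply: leeD; apply: lee_wpmul2l; rewrite ?lee_fin ?peval_ge0 ?subr_ge0 ?peval_le1 //;
  [apply: IH1|apply: IH2] => //.
- exact: le_refl.
Qed.

Lemma lfp_le (Phi Psi : expect R -> expect R) :
  (forall g s, Phi g s <= Psi g s) -> forall s, lfp Phi s <= lfp Psi s.
Proof.
move=> H s /=; apply: le_ereal_inf => _ [g Hg <-]; exists g => //.
by move=> s'; apply: le_trans (Hg s'); apply: H.
Qed.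

Lemma loopstep_mono phi (f1 f2 g1 g2 : expect R) :
  (forall s, f1 s <= f2 s) -> (forall s, g1 s <= g2 s) ->
  forall s, e_loopstep phi f1 g1 s <= e_loopstep phi f2 g2 s.
Proof. by move=> H1 H2 s /=; rewrite !ivM; case: (phi s) => /=; rewrite ?add0e ?adde0. Qed.

Lemma wp_mono m (C : prog R) : forall (f g : expect R),
  (forall s, f s <= g s) -> forall s, wp m C f s <= wp m C g s.
Proof.
elim: C => [|x E|C1 IH1 C2 IH2|p1 p2 H C1 IH1 C2 IH2|C1 IH1 p C2 IH2|phi C IH I]
  f g fg s /=.
- exact: fg.
- exact: fg.
- by apply: IH1 => s'; apply: IH2.
- destruct m => /=.
  + by apply: le_min2; case: (p1 s); case: (p2 s) => //; apply: IH1 || apply: IH2.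
  + by apply: le_max2; apply: lee_wpmul2l; rewrite ?iv_ge0 //; [apply: IH1|apply: IH2].
- apply: leeD; apply: lee_wpmul2l; rewrite ?lee_fin ?peval_ge0 ?subr_ge0 ?peval_le1 //;
  [apply: IH1|apply: IH2] => //.
- by apply: lfp_le => h s'; apply: loopstep_mono.
Qed.

Lemma if_ge0 (b : bool) (x : \bar R) : 0 <= x -> 0 <= (if b then x else 0).
Proof. by case: b. Qed.

Lemma wp_impl m (C' C : prog R) : impl C' C ->
  forall f s, mle m (wp m C f s) (wp m C' f s).
Proof.
elim=> {C' C}.
- by move=> C f s; case: m => /=.
- move=> C1 C2 C3 _ IH1 _ IH2 f s; move: (IH1 f s) (IH2 f s); clear IH1 IH2.
  case: m => /= a b.
  + exact: le_trans b a.
  + exact: le_trans a b.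
- move=> C1' C2' C1 C2 _ IH1 _ IH2 f s /=.
  move: (IH1 (wp m C2 f) s); clear IH1; case: m IH2 => /= IH2 a.
  + apply: le_trans a _; apply: wp_mono => s'; exact: (IH2 f s').
  + apply: le_trans a; apply: wp_mono => s'; exact: (IH2 f s').
- move=> C1' C2' C1 C2 p _ IH1 _ IH2 f s /=.
  move: (IH1 f s) (IH2 f s); clear IH1 IH2; case: m => /= a b;
  apply: leeD; apply: lee_wpmul2l; rewrite ?lee_fin ?peval_ge0 ?subr_ge0 ?peval_le1 //.
- move=> C1' C2' C1 C2 p1' p2' p1 p2 H' H _ IH1 _ IH2 h1 h2 _ f s.
  move: (IH1 f s) (IH2 f s); clear IH1 IH2; case: m => /= a b.
  + apply: le_min2.
    * by case E: (p1' s); [rewrite (h1 _ E)|rewrite leey].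
    * by case E: (p2' s); [rewrite (h2 _ E)|rewrite leey].
  + rewrite !ivM; apply: le_max2.
    * case E: (p1' s); [by rewrite (h1 _ E)|by apply: if_ge0; apply: ev_ge0].
    * case E: (p2' s); [by rewrite (h2 _ E)|by apply: if_ge0; apply: ev_ge0].
- move=> phi C' C I _ IH f s /=.
  case: m IH => /= IH; apply: lfp_le => g s'; apply: loopstep_mono => // t;
  exact: (IH g t).
Qed.

Lemma trans_impl m d (C : prog R) : forall f, impl (trans m d C f) C.
Proof.
elim: C => [|x E|C1 IH1 C2 IH2|p1 p2 H C1 IH1 C2 IH2|C1 IH1 p C2 IH2|phi C IH I] f /=.
- exact: impl_refl.
- exact: impl_refl.
- exact: impl_seq.
- apply: impl_if => //; first by move=> s /andP[].
  + by move=> s /andP[].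
  + exact: psi_cover.
- exact: impl_pchoice.
- exact: impl_while.
Qed.

Fixpoint sim (A B : prog R) : Prop :=
  match A, B with
  | Skip, Skip => True
  | Assign x E, Assign y F => x = y /\ E = F
  | Seq a b, Seq c d => sim a c /\ sim b d
  | If p1' p2' _ a b, If p1 p2 _ c d =>
      sim a c /\ sim b d /\ (forall s, p1' s -> p1 s) /\ (forall s, p2' s -> p2 s)
  | PChoice a p b, PChoice c q d => p = q /\ sim a c /\ sim b d
  | While phi a I1, While psi c J1 => phi = psi /\ I1 = J1 /\ sim a c
  | _, _ => False
  end.

Lemma sim_refl (C : prog R) : sim C C.
Proof. by elim: C => //=. Qed.

Lemma sim_trans (A : prog R) : forall B C, sim A B -> sim B C -> sim A C.
Proof.
elim: A => [|x E|a1 IH1 a2 IH2|p1 p2 H a1 IH1 a2 IH2|a1 IH1 p a2 IH2|phi a IH I]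
  [|y F|b1 b2|q1 q2 H' b1 b2|b1 q b2|psi b J] //
  [|z G|c1 c2|r1 r2 H'' c1 c2|c1 r c2|chi c K] //=.
- by move=> [-> ->] [-> ->].
- by move=> [s1 s2] [t1 t2]; split; [exact: IH1 s1 t1|exact: IH2 s2 t2].
- move=> [s1 [s2 [h1 h2]]] [t1 [t2 [k1 k2]]]; split; first exact: IH1 s1 t1.
  split; first exact: IH2 s2 t2.
  by split=> s Hs; [apply: k1; apply: h1|apply: k2; apply: h2].
- by move=> [-> [s1 s2]] [-> [t1 t2]]; split => //; split; [exact: IH1 s1 t1|exact: IH2 s2 t2].
- by move=> [-> [-> s1]] [-> [-> t1]]; split => //; split => //; exact: IH s1 t1.
Qed.

Lemma impl_sim (A B : prog R) : impl A B -> sim A B.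
Proof.
elim=> {A B} /=.
- exact: sim_refl.
- by move=> C1 C2 C3 _ h1 _ h2; exact: sim_trans h1 h2.
- by [].
- by [].
- by move=> *; split => //; split => //; split.
- by [].
Qed.


Definition mdir (m : mode) : bool := match m with Dwp => true | Awp => false end.

Lemma wpstar_trans m (C : prog R) : forall C' f,
  sim C' (trans m (mdir m) C f) -> forall s, mle m (wpstar m C' f s) (wpstar m C f s).
Proof.
elim: C => [|x E|C1 IH1 C2 IH2|p1 p2 H C1 IH1 C2 IH2|C1 IH1 p C2 IH2|phi C IH I0]
  [|y F|a b|q1 q2 H' a b|a q b|psi a J] f //= Hs s.
- by case: m => /=.
- by case: Hs => -> ->; case: m => /=.
- case: Hs => s1 s2.
  move: (IH1 _ _ s1 s) (fun t => IH2 _ _ s2 t); clear IH1 IH2 s1 s2.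
  case: m => /= u w.
  + apply: le_trans u; apply: wpstar_mono => t; exact: (w t).
  + apply: le_trans u _; apply: wpstar_mono => t; exact: (w t).
- case: Hs => s1 [s2 [h1 h2]].
  move: (IH1 _ _ s1 s) (IH2 _ _ s2 s) (h1 s) (h2 s) (H' s); clear IH1 IH2 h1 h2 s1 s2.
  case: m => /=; rewrite /psi1 /psi2 /cmp => u v k1 k2 cov.
  + case E1: (q1 s).
    * have /andP[P1 imp] := k1 E1; rewrite P1 ge_min; apply/orP; left.
      rewrite le_min u /=; case: (p2 s) imp => //= ?; last by rewrite leey.
      exact: le_trans u _.
    * rewrite E1 /= in cov; have /andP[P2 imp] := k2 cov; rewrite P2 ge_min cov.
      apply/orP; right; rewrite le_min v andbT; case: (p1 s) imp => //= ?;
      last by rewrite leey.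
      exact: le_trans v _.
  + rewrite !ivM; case E1: (q1 s).
    * have /andP[P1 imp] := k1 E1; rewrite P1 le_max; apply/orP; left.
      rewrite ge_max u /=; case: (p2 s) imp => //= ?; last exact: ev_ge0.
      exact: le_trans u.
    * rewrite E1 /= in cov; have /andP[P2 imp] := k2 cov; rewrite P2 le_max cov.
      apply/orP; right; rewrite ge_max v andbT; case: (p1 s) imp => //= ?;
      last exact: ev_ge0.
      exact: le_trans v.
- case: Hs => <- [s1 s2].
  move: (IH1 _ _ s1 s) (IH2 _ _ s2 s); clear IH1 IH2 s1 s2; case: m => /= u v;
  apply: leeD; apply: lee_wpmul2l; rewrite ?lee_fin ?peval_ge0 ?subr_ge0 ?peval_le1 //.
- by case: Hs => _ [-> _]; clear IH; case: m => /=.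
Qed.

End Proofs.

Theorem theorem6p5 (R : realType) (vcp : vcprov R) :
  (preserves vcp Dwp (@trans_dwp R) -> yields_upper vcp Dwp ->
   forall (C C' : prog R) (f : expect R),
     vc vcp Dwp C f -> impl C' (trans_dwp C f) ->
     exp_le (dwp C f) (dwp C' f) /\ exp_le (dwp C' f) (dwpstar C f))
  /\
  (preserves vcp Awp (@trans_awp R) -> yields_lower vcp Awp ->
   forall (C C' : prog R) (f : expect R),
     vc vcp Awp C f -> impl C' (trans_awp C f) ->
     exp_le (awp C' f) (awp C f) /\ exp_le (awpstar C f) (awp C' f)).
Proof.
split.
- move=> pres up C C' f hvc him; split.
  + move=> s; exact: (wp_impl Dwp (impl_trans him (trans_impl Dwp true C f)) f s).
  + move=> s; apply: le_trans (up _ _ (pres _ _ _ hvc him) s) _.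
    exact: (@wpstar_trans R Dwp C C' f (impl_sim him) s).
- move=> pres low C C' f hvc him; split.
  + move=> s; exact: (wp_impl Awp (impl_trans him (trans_impl Awp false C f)) f s).
  + move=> s; apply: le_trans (low _ _ (pres _ _ _ hvc him) s).
    exact: (@wpstar_trans R Awp C C' f (impl_sim him) s).
Qed.
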